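(* Let $n\ge1$. Let $\mathbf{R}$ be a subalgebra of $\mathbf{P\L}_n\times\mathbf{P\L}_n$ with $\mathbf{R}\subseteq{\le}$. Assume $\mathbf{R}$ is not equal to the diagonal $\Delta_{\mathbf{S}}=\{(s,s):s\in S\}$ of any subalgebra $\mathbf{S}$ of $\mathbf{P\L}_n$. Put $S=\mathrm{pr}_1(\mathbf{R})\times\mathrm{pr}_2(\mathbf{R})$. Then $$\lhd\cap S\;\subseteq\;\mathbf{R}\;\subseteq\;{\le}\cap S.$$
   Context: For $n\ge 1$, the algebra $\mathbf{P\L}_n=\langle\{0,\tfrac1n,\dots,\tfrac{n-1}{n},1\},\wedge,\vee,\odot,\oplus,0,1\rangle$ has $\wedge=\min$, $\vee=\max$, $x\odot y=\max\{0,x+y-1\}$ and $x\oplus y=\min\{1,x+y\}$. The order is ${\le}=\{(x,y)\in\mathbf{P\L}_n^2: x\le y\}$. The relation $\lhd$ is $\lhd=\{(x,y)\in\mathbf{P\L}_n^2: x=0\text{ or }y=1\}$. Both $\le$ and $\lhd$ are subalgebras of $\mathbf{P\L}_n\times\mathbf{P\L}_n$. The maps $\mathrm{pr}_1,\mathrm{pr}_2$ are the projections. *)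

(* Defs.v *)
From mathcomp Require Import all_boot.
Set Implicit Arguments. Unset Strict Implicit. Unset Printing Implicit Defensive.

(* The algebra PL_n: the element k : 'I_n.+1 encodes the rational k/n.
   Under this encoding min/max are min/max, x (.) y = max(0, x+y-1)
   becomes (x + y) - n (truncated), x (+) y = min(1, x+y) becomes
   minn n (x + y), 0 is ord0 and 1 is ord_max (value n). *)
Definition PL (n : nat) := 'I_n.+1.

Section PLops.
Variable n : nat.
Definition pl_meet (x y : 'I_n.+1) : 'I_n.+1 := inord (minn x y).
Definition pl_join (x y : 'I_n.+1) : 'I_n.+1 := inord (maxn x y).
Definition pl_odot (x y : 'I_n.+1) : 'I_n.+1 := inord ((x + y) - n).
Definition pl_oplus (x y : 'I_n.+1) : 'I_n.+1 := inord (minn n (x + y)).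
Definition pl_zero : 'I_n.+1 := ord0.
Definition pl_one : 'I_n.+1 := ord_max.

Definition is_subalg (S : {set 'I_n.+1}) : Prop :=
  pl_zero \in S /\ pl_one \in S /\
  (forall x y, x \in S -> y \in S ->
     [/\ pl_meet x y \in S, pl_join x y \in S,
         pl_odot x y \in S & pl_oplus x y \in S]).

Definition is_subalg2 (R : {set 'I_n.+1 * 'I_n.+1}) : Prop :=
  (pl_zero, pl_zero) \in R /\ (pl_one, pl_one) \in R /\
  (forall p q, p \in R -> q \in R ->
     [/\ (pl_meet p.1 q.1, pl_meet p.2 q.2) \in R,
         (pl_join p.1 q.1, pl_join p.2 q.2) \in R,
         (pl_odot p.1 q.1, pl_odot p.2 q.2) \in R &
         (pl_oplus p.1 q.1, pl_oplus p.2 q.2) \in R]).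

Definition pl_le : {set 'I_n.+1 * 'I_n.+1} :=
  [set p | (nat_of_ord p.1 <= nat_of_ord p.2)%N].
Definition pl_lhd : {set 'I_n.+1 * 'I_n.+1} :=
  [set p | (p.1 == pl_zero) || (p.2 == pl_one)].

Definition diag (S : {set 'I_n.+1}) : {set 'I_n.+1 * 'I_n.+1} :=
  [set (s, s) | s in S].

Definition pr1 (R : {set 'I_n.+1 * 'I_n.+1}) : {set 'I_n.+1} := [set p.1 | p in R].
Definition pr2 (R : {set 'I_n.+1 * 'I_n.+1}) : {set 'I_n.+1} := [set p.2 | p in R].
End PLops.

(* Main.v *)
Require Import Defs.
From mathcomp Require Import all_boot.
From mathcomp Require Import zify.

Section L.
Variable n : nat.
Implicit Types x y : 'I_n.+1.

Lemma v_odot x y : nat_of_ord (pl_odot x y) = (x + y - n)%N.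
Proof. have := ltn_ord x; have := ltn_ord y => ? ?; rewrite /pl_odot inordK //; lia. Qed.
Lemma v_oplus x y : nat_of_ord (pl_oplus x y) = minn n (x + y).
Proof. have := ltn_ord x; have := ltn_ord y => ? ?; rewrite /pl_oplus inordK //; lia. Qed.
Lemma v_meet x y : nat_of_ord (pl_meet x y) = minn x y.
Proof. have := ltn_ord x; have := ltn_ord y => ? ?; rewrite /pl_meet inordK //; lia. Qed.
Lemma v_join x y : nat_of_ord (pl_join x y) = maxn x y.
Proof. have := ltn_ord x; have := ltn_ord y => ? ?; rewrite /pl_join inordK //; lia. Qed.
Lemma v_one : nat_of_ord (pl_one n) = n. Proof. by []. Qed.
Lemma v_zero : nat_of_ord (pl_zero n) = 0. Proof. by []. Qed.

Variable R : {set 'I_n.+1 * 'I_n.+1}.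
Hypothesis HR : is_subalg2 R.

Lemma odot_down x : (x, pl_one n) \in R -> (x < n)%N ->
  forall m (x' : 'I_n.+1), (x' <= m)%N -> (x', pl_one n) \in R ->
  (pl_zero n, pl_one n) \in R.
Proof.
move: HR => [h0 [h1 hop]] Hx xn m; elim: m => [|m IH] x' le Hx'.
  by have <- : x' = pl_zero n by apply: ord_inj; rewrite v_zero; lia.
case: (eqVneq (nat_of_ord x') 0) => [e|ne].
  by have <- : x' = pl_zero n by apply: ord_inj; rewrite v_zero; lia.
have [_ _ Hod _] := hop _ _ Hx' Hx.
have e1 : pl_odot (pl_one n) (pl_one n) = pl_one n.
  by apply: ord_inj; rewrite v_odot v_one; lia.
rewrite /= e1 in Hod.
apply: (IH _ _ Hod); rewrite v_odot; have := ltn_ord x'; lia.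
Qed.

Lemma oplus_up y : (pl_zero n, y) \in R -> (0 < y)%N ->
  forall m (y' : 'I_n.+1), (n - y' <= m)%N -> (pl_zero n, y') \in R ->
  (pl_zero n, pl_one n) \in R.
Proof.
move: HR => [h0 [h1 hop]] Hy yp m; elim: m => [|m IH] y' le Hy'.
  by have <- : y' = pl_one n by apply: ord_inj; rewrite v_one; have := ltn_ord y'; lia.
case: (eqVneq (nat_of_ord y') n) => [e|ne].
  by have <- : y' = pl_one n by apply: ord_inj; rewrite v_one; lia.
have [_ _ _ Hop] := hop _ _ Hy' Hy.
have e1 : pl_oplus (pl_zero n) (pl_zero n) = pl_zero n.
  by apply: ord_inj; rewrite v_oplus v_zero; lia.
rewrite /= e1 in Hop.
apply: (IH _ _ Hop); rewrite v_oplus; have := ltn_ord y'; lia.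
Qed.

Lemma gap d : forall x y, (x, y) \in R -> (x < y)%N -> (n - (y - x) <= d)%N ->
  (pl_zero n, pl_one n) \in R.
Proof.
move: (HR) => [h0 [h1 hop]].
elim: d => [|d IH] x y Hxy lt le.
- have ex : x = pl_zero n by apply: ord_inj; rewrite v_zero; have := ltn_ord y; lia.
  have ey : y = pl_one n by apply: ord_inj; rewrite v_one; have := ltn_ord y; lia.
  by rewrite -ex -ey.
- have := ltn_ord y; have := ltn_ord x => xn yn.
  case: (eqVneq (nat_of_ord y) n) => [e|ne].
    have ey : y = pl_one n by apply: ord_inj; rewrite v_one.
    rewrite ey in Hxy; have xlt : (x < n)%N by lia.
    exact: (odot_down x Hxy xlt x x (leqnn x) Hxy).
  case: (eqVneq (nat_of_ord x) 0) => [e|nx].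
    have ex : x = pl_zero n by apply: ord_inj; rewrite v_zero.
    rewrite ex in Hxy; apply: (oplus_up y Hxy _ (n - y) y (leqnn (n - y)) Hxy); lia.
  have [_ _ Hod Hop] := hop _ _ Hxy Hxy.
  rewrite /= in Hod Hop.
  case: (leqP (2 * y) n) => h2.
    apply: (IH _ _ Hop); rewrite !v_oplus; lia.
  case: (leqP n (2 * x)) => h3.
    apply: (IH _ _ Hod); rewrite !v_odot; lia.
  have ey : pl_oplus y y = pl_one n by apply: ord_inj; rewrite v_oplus v_one; lia.
  rewrite ey in Hop.
  apply: (odot_down _ Hop _ _ _ (leqnn _) Hop); rewrite v_oplus; lia.
Qed.
End L.

Theorem lemma3p9 (n : nat) (hn : (1 <= n)%N) (R : {set 'I_n.+1 * 'I_n.+1}) :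
  is_subalg2 R ->
  R \subset pl_le n ->
  ~ (exists S : {set 'I_n.+1}, is_subalg S /\ R = diag S) ->
  (pl_lhd n :&: setX (pr1 R) (pr2 R)) \subset R /\
  R \subset (pl_le n :&: setX (pr1 R) (pr2 R)).
Proof.
move=> HR Hle Hnd; move: (HR) => [h0 [h1 hop]]; rewrite /pr1 /pr2 /diag.
split; last first.
  apply/subsetP => p pR; rewrite inE (subsetP Hle _ pR) /=.
  by case: p pR => a b pR; rewrite inE; apply/andP; split;
    apply/imsetP; exists (a, b).
have H01 : (pl_zero n, pl_one n) \in R.
  case: (boolP [exists p in R, (nat_of_ord p.1 < nat_of_ord p.2)%N]).
    case/exists_inP => [[x y] Hxy lt].
    by apply: (@gap n R HR n x y Hxy lt); lia.
  move/exists_inP => Hno; exfalso; apply: Hnd; exists (pr1 R).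
  split.
    split; first by apply/imsetP; exists (pl_zero n, pl_zero n).
    split; first by apply/imsetP; exists (pl_one n, pl_one n).
    move=> x y /imsetP [p pR ->] /imsetP [q qR ->].
    have [a b c d] := hop _ _ pR qR.
    by split; apply/imsetP; [exists (pl_meet p.1 q.1, pl_meet p.2 q.2)
      | exists (pl_join p.1 q.1, pl_join p.2 q.2)
      | exists (pl_odot p.1 q.1, pl_odot p.2 q.2)
      | exists (pl_oplus p.1 q.1, pl_oplus p.2 q.2)].
  have diagR p : p \in R -> p.1 = p.2.
    move=> pR; apply: ord_inj; have := subsetP Hle _ pR; rewrite inE => le.
    have : ~~ (nat_of_ord p.1 < nat_of_ord p.2)%N by apply/negP => lt; apply: Hno; exists p.
    lia.
  apply/setP => [[a b]]; apply/idP/idP.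
    move=> abR; have e := diagR _ abR; rewrite /= in e; subst b.
    by apply/imsetP; exists a => //; apply/imsetP; exists (a, a).
  case/imsetP => s /imsetP [p pR ->] e; case: e => -> ->.
  by move: (diagR _ pR); case: p pR => u v pR /= e; rewrite {2}e.
apply/subsetP => [[a b]]; rewrite !inE /= => /andP [hl /andP [ha hb]].
case/imsetP: ha => [[a1 b1] p1R /= ea]; subst a1.
case/imsetP: hb => [[a2 b2] p2R /= eb]; subst b2.
case/orP: hl => /eqP e; subst.
- have [m _ _ _] := hop _ _ H01 p2R.
  have e1 : pl_meet (pl_zero n) a2 = pl_zero n by apply: ord_inj; rewrite v_meet v_zero; lia.
  have e2 : pl_meet (pl_one n) b = b by apply: ord_inj; rewrite v_meet v_one; have := ltn_ord b; lia.
  by rewrite /= e1 e2 in m.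
- have [_ j _ _] := hop _ _ H01 p1R.
  have e1 : pl_join (pl_zero n) a = a by apply: ord_inj; rewrite v_join v_zero; lia.
  have e2 : pl_join (pl_one n) b1 = pl_one n by apply: ord_inj; rewrite v_join v_one; have := ltn_ord b1; lia.
  by rewrite /= e1 e2 in j.
Qed.
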